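(* Let $(X_B,X_C,X_R)$ be an OCC of a graph $G$, let $f_X$ be a proper $2$-coloring of $G[X_B]$, let $B^\ast \subseteq X_B$ satisfy property $(\star)$, and let $G'$ be the reduced graph. If $S'$ is a minimum-size odd cycle transversal of $G'$, then $S' \subseteq V(G) \cap V(G')$ and $S'$ is a minimum-size odd cycle transversal of $G$.
   Context: An odd cycle transversal (OCT) of a graph is a vertex set whose removal leaves a bipartite graph. An odd cycle cut (OCC) of $G$ is a partition $(X_B, X_C, X_R)$ of $V(G)$ such that $G[X_B]$ is bipartite, there is no edge between $X_B$ and $X_R$, and $X_B \cup X_C \neq \emptyset$. Auxiliary graph: $G_{\mathrm{aux}}$ is obtained from a copy of $G[X_B]$ by adding, for each $v \in X_C$, new vertices $v^{(0)}, v^{(1)}$ and, for each $u \in N_G(v) \cap X_B$, the edge $v^{(f_X(u))}u$; $T := \{v^{(i)} : v \in X_C, i \in \{0,1\}\}$. Property $(\star)$ of $B^\ast \subseteq X_B$: for every partition $(T_1,T_2,T_3,T_X)$ of $T$ into four possibly empty parts, if there exists $S \subseteq X_B$ with $|S| \le |T|$ separating $T_i$ and $T_j$ (no connected component of $G_{\mathrm{aux}} - T_X - S$ meets both) for all $1 \le i < j \le 3$, then $B^\ast$ contains such a set $S$ of minimum possible size. Reduced graph $G'$: start from $G - (X_B \setminus B^\ast)$; then, for every unordered pair $\{u,v\}$ of (not necessarily distinct) vertices of $X_C \cup B^\ast$ and every parity $p \in \{\text{even},\text{odd}\}$ such that $G$ contains a $(u,v)$-walk of length of parity $p$ that has at least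 one internal vertex and all of whose internal vertices lie in $X_B \setminus B^\ast$: if $p$ is even, add two new vertices $x, x'$, each adjacent to exactly $u$ and $v$; if $p$ is odd, add four new vertices $x,y,x',y'$ and the edges $ux, xy, yv, ux', x'y', y'v$. All added vertices are distinct and new. *)

(* Defs.v *)
From mathcomp Require Import all_boot.
From mathcomp Require Import boolp.
Set Implicit Arguments. Unset Strict Implicit. Unset Printing Implicit Defensive.

Section Generic.
Variable T : finType.

Definition bipartite_on (e : rel T) (A : {set T}) : Prop :=
  exists f : T -> bool, forall x y, x \in A -> y \in A -> e x y -> f x != f y.

Definition is_oct (e : rel T) (W S : {set T}) : Prop :=
  S \subset W /\ bipartite_on e (W :\: S).

Definition is_min_oct (e : rel T) (W S : {set T}) : Prop :=
  is_oct e W S /\ forall S2, is_oct e W S2 -> #|S| <= #|S2|.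

Definition conn_in (e : rel T) (A : {set T}) (x y : T) : bool :=
  connect (fun a b => [&& a \in A, b \in A & e a b]) x y.

Definition separated_in (e : rel T) (A P Q : {set T}) : Prop :=
  forall x y, x \in P -> y \in Q -> ~~ conn_in e A x y.
End Generic.

Section OCC.
Variables (V : finType) (e : rel V).

Definition simple_graph : Prop := symmetric e /\ irreflexive e.

Definition is_OCC (XB XC XR : {set V}) : Prop :=
  [/\ [&& [disjoint XB & XC], [disjoint XB & XR] & [disjoint XC & XR]],
      XB :|: XC :|: XR = [set: V],
      bipartite_on e XB,
      (forall x y, x \in XB -> y \in XR -> ~~ e x y) &
      XB :|: XC != set0].

Definition proper2col_on (XB : {set V}) (f : V -> bool) : Prop :=
  forall x y, x \in XB -> y \in XB -> e x y -> f x != f y.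

(* ---- auxiliary graph: copy of G[XB] (inl) plus v^(i) = inr (v, i) ---- *)
Definition auxV := (V + (V * bool))%type.

Definition aux_edge (XB XC : {set V}) (f : V -> bool) (a b : auxV) : bool :=
  match a, b with
  | inl x, inl y => [&& x \in XB, y \in XB & e x y]
  | inr (v, i), inl u => [&& v \in XC, u \in XB, e v u & i == f u]
  | inl u, inr (v, i) => [&& v \in XC, u \in XB, e v u & i == f u]
  | _, _ => false
  end.

Definition aux_T (XC : {set V}) : {set auxV} :=
  [set z : auxV | if z is inr (v, _) then v \in XC else false].

Definition aux_W (XB XC : {set V}) : {set auxV} :=
  (@inl V (V * bool)) @: XB :|: aux_T XC.

Definition separates3 (XB XC : {set V}) (f : V -> bool) (S : {set V})
    (T1 T2 T3 TX : {set auxV}) : Prop :=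
  let A := aux_W XB XC :\: (TX :|: (@inl V (V * bool)) @: S) in
  [/\ separated_in (aux_edge XB XC f) A T1 T2,
      separated_in (aux_edge XB XC f) A T1 T3 &
      separated_in (aux_edge XB XC f) A T2 T3].

Definition partition4 (T0 T1 T2 T3 TX : {set auxV}) : Prop :=
  [/\ [&& [disjoint T1 & T2], [disjoint T1 & T3] & [disjoint T1 & TX]],
      [&& [disjoint T2 & T3], [disjoint T2 & TX] & [disjoint T3 & TX]] &
      T1 :|: T2 :|: T3 :|: TX = T0].

Definition property_star (XB XC : {set V}) (f : V -> bool) (Bs : {set V}) : Prop :=
  forall T1 T2 T3 TX : {set auxV},
    partition4 (aux_T XC) T1 T2 T3 TX ->
    (exists S : {set V}, [/\ S \subset XB, #|S| <= #|aux_T XC| &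
                             separates3 XB XC f S T1 T2 T3 TX]) ->
    exists S : {set V}, [/\ S \subset Bs, separates3 XB XC f S T1 T2 T3 TX &
       forall S2 : {set V}, S2 \subset XB -> separates3 XB XC f S2 T1 T2 T3 TX ->
         #|S| <= #|S2|].

Definition walk_through (D : {set V}) (u v : V) (p : bool) : Prop :=
  exists s : seq V, [/\ s != [::], all (mem D) s, path e u (rcons s v) &
                        odd (size s).+1 = p].

(* New vertices are inr (u, v, p, i): the gadget for the unordered pair {u,v}
   (represented by the ordered pair with enum_rank u <= enum_rank v) and
   parity p.  Even gadget: i = 0 (x), 1 (x').  Odd gadget: i = 0 (x),
   1 (y), 2 (x'), 3 (y'). *)
Definition redV := (V + (V * V * bool * 'I_4))%type.

Definition red_W (XB XC Bs : {set V}) : {set redV} :=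
  [set z : redV | match z with
    | inl x => x \notin XB :\: Bs
    | inr (u, v, p, i) =>
        [&& u \in XC :|: Bs, v \in XC :|: Bs,
            (enum_rank u <= enum_rank v)%N,
            `[< walk_through (XB :\: Bs) u v p >] &
            p || (i < 2)%N]
    end].

Definition red_base (a b : redV) : bool :=
  match a, b with
  | inl x, inl y => e x y
  | inr (u, v, p, i), inl w =>
      if ~~ p then (w == u) || (w == v)
      else (((i == 0 :> nat) || (i == 2 :> nat)) && (w == u))
        || (((i == 1 :> nat) || (i == 3 :> nat)) && (w == v))
  | inr (u, v, p, i), inr (u', v', p', j) =>
      [&& p, (u, v, p) == (u', v', p') &
          ((i == 0 :> nat) && (j == 1 :> nat)) ||
          ((i == 2 :> nat) && (j == 3 :> nat))]
  | _, _ => false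
  end.

Definition red_edge (XB XC Bs : {set V}) (a b : redV) : bool :=
  [&& a \in red_W XB XC Bs, b \in red_W XB XC Bs & red_base a b || red_base b a].
End OCC.

(* Main.v *)
Require Import Defs.
From mathcomp Require Import all_boot boolp zify.
Set Implicit Arguments. Unset Strict Implicit. Unset Printing Implicit Defensive.

Section Main.
Variables (V : finType) (e : rel V) (XB XC XR Bs : {set V}) (fX : V -> bool).
Hypothesis esym : symmetric e.

Lemma walk_parity (S : {set V}) (h : V -> bool) :
  (forall x y, x \notin S -> y \notin S -> e x y -> h x != h y) ->
  forall s u v, u \notin S -> v \notin S -> all (fun x => x \notin S) s ->
  path e u (rcons s v) -> odd (size s).+1 = h u (+) h v.
Proof.
move=> Hh; elim=> [|a s IH] u v Hu Hv /= Hs.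
  by rewrite andbT => /(Hh _ _ Hu Hv); case: (h u); case: (h v).
case/andP: Hs => Ha Hs; case/andP => Hua Hp.
have := IH _ _ Ha Hv Hs Hp; rewrite /= => ->.
move: (Hh _ _ Hu Ha Hua); case: (h u); case: (h a); case: (h v) => //.
Qed.

Lemma path_rev_rcons s u v : path e u (rcons s v) -> path e v (rcons (rev s) u).
Proof.
move=> H.
have := rev_path e u (rcons s v).
rewrite last_rcons belast_rcons rev_cons => ->.
by rewrite (eq_path (e' := e)) // => x y /=; rewrite esym.
Qed.

Lemma walk_through_sym D u v p : walk_through e D u v p -> walk_through e D v u p.
Proof.
case=> s [Hs Ha Hp Ho]; exists (rev s); split.
- by move: Hs; case: (s) => //= a s' _; rewrite rev_cons; case: (rev s').
- by rewrite all_rev.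
- exact: path_rev_rcons.
- by rewrite size_rev.
Qed.


Lemma wparity (S : {set V}) (h : V -> bool) u v p :
  (forall x y, x \notin S -> y \notin S -> e x y -> h x != h y) ->
  [disjoint S & XB :\: Bs] ->
  walk_through e (XB :\: Bs) u v p -> u \notin S -> v \notin S -> p = h u (+) h v.
Proof.
move=> Hh Hdis [s [_ Hall Hp <-]] Hu Hv.
apply: (walk_parity Hh) => //.
apply/allP => x /(allP Hall) Hx.
apply/negP => HxS; move: Hx; have := disjointFr Hdis HxS; rewrite !inE => -> //.
Qed.

Definition kcol (S : {set V}) (h : V -> bool) (z : redV V) : bool :=
  match z with
  | inl x => h x
  | inr (u, v, p, i) =>
     if p then
       let b := if u \in S then h v else ~~ h u in
       if (i == 0 :> nat) || (i == 2 :> nat) then b else ~~ b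
     else if u \in S then ~~ h v else ~~ h u
  end.

Lemma M1 (S : {set V}) (h : V -> bool) :
  (forall x y, x \notin S -> y \notin S -> e x y -> h x != h y) ->
  [disjoint S & XB :\: Bs] ->
  is_oct (red_edge e XB XC Bs) (red_W e XB XC Bs) (inl @: S).
Proof.
move=> Hh Hdis.
have Hinl : forall x, (inl x \in (@inl V (V * V * bool * 'I_4)) @: S) = (x \in S).
  by move=> x; rewrite mem_imset //; move=> ? ? [].
have Hinr : forall z, (inr z \in (@inl V (V * V * bool * 'I_4)) @: S) = false.
  by move=> z; apply/imsetP => -[].
split.
  apply/subsetP => z /imsetP [x Hx ->]; rewrite inE.
  by rewrite (disjointFr Hdis Hx).
have key : forall a b, a \in red_W e XB XC Bs :\: inl @: S ->
    b \in red_W e XB XC Bs :\: inl @: S -> red_base e a b -> kcol S h a != kcol S h b.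
  move=> [x|[[[u v] p] i]] [y|[[[u' v'] p'] j]]; rewrite !inE ?Hinl ?Hinr //=.
  - by case/andP => Hx _; case/andP => Hy _; apply: Hh.
  - case/and5P=> _ _ _ /boolp.asboolP Hw Hpi; case/andP => Hy _.
    have Hpar : u \notin S -> v \notin S -> p = h u (+) h v.
      by move=> Hu Hv; apply: (wparity Hh Hdis Hw).
    case: p Hw Hpar Hpi => Hw Hpar Hpi /=.
    + case/orP => /andP [Hi /eqP Hyu]; subst y.
      * by rewrite Hi (negbTE Hy); case: (h u).
      * have -> : ((i == 0 :> nat) || (i == 2 :> nat)) = false.
          by move: i Hi {Hpi} => [[|[|[|[|?]]]] ?].
        case: (boolP (u \in S)) => Hu /=; first by case: (h v).
        by move: (Hpar Hu Hy); case: (h u); case: (h v).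
    + case/orP => /eqP Hyu; subst y.
      * by rewrite (negbTE Hy); case: (h u).
      * case: (boolP (u \in S)) => Hu /=; first by case: (h v).
        by move: (Hpar Hu Hy); case: (h u); case: (h v).
  - move=> _ _ /and3P [Hp /eqP [<- <- <-] Hij]; rewrite Hp.
    by case/orP: Hij => /andP [/eqP -> /eqP ->] /=; case: (if _ then _ else _).
exists (kcol S h) => a b Ha Hb /and3P [_ _ /orP [H|H]]; first exact: key.
by rewrite eq_sym; apply: key.
Qed.


Hypothesis Hocc : is_OCC e XB XC XR.
Hypothesis Hf : proper2col_on e XB fX.
Hypothesis HBs : Bs \subset XB.

Lemma occ_BC x : x \in XB -> (x \in XC) = false.
Proof.
case: Hocc => /and3P [H _ _] _ _ _ _ Hx; exact: (disjointFr H Hx).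
Qed.

Lemma occ_cover x : [|| x \in XB, x \in XC | x \in XR].
Proof.
case: Hocc => _ H _ _ _; have : x \in [set: V] by [].
by rewrite -H !inE orbA.
Qed.

Lemma occ_edge x y : x \in XB -> y \notin XB -> e x y -> y \in XC.
Proof.
move=> Hx Hy Hxy; case: Hocc => _ _ _ H _.
move: (occ_cover y); rewrite (negbTE Hy) /=; case/orP => // Hr.
by move: (H _ _ Hx Hr); rewrite Hxy.
Qed.


Definition good (S2 : {set V}) :=
  [disjoint S2 & XB :\: Bs] /\
  exists h : V -> bool, forall x y, x \notin S2 -> y \notin S2 -> e x y -> h x != h y.

Lemma cardU_le (T : finType) (A B : {set T}) : #|A :|: B| <= #|A| + #|B|.
Proof. by rewrite cardsU leq_subr. Qed.

Lemma M3A (S : {set V}) (g : V -> bool) :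
  (forall x y, x \notin S -> y \notin S -> e x y -> g x != g y) ->
  #|XC| < #|S :&: XB| -> exists S2, good S2 /\ #|S2| <= #|S|.
Proof.
move=> Hg Hc; exists ((S :\: XB) :|: XC); split; last first.
  apply: leq_trans (cardU_le _ _) _.
  by rewrite -(cardsID XB S) [#|S :&: XB| + _]addnC leq_add2l ltnW.
split.
  rewrite disjoints_subset; apply/subsetP => x; rewrite !inE.
  case/orP => [/andP [Hx _]|Hx]; first by rewrite (negbTE Hx) andbF.
  have HB : x \notin XB by apply/negP => HB; rewrite occ_BC in Hx.
  by rewrite (negbTE HB) andbF.
exists (fun x => if x \in XB then fX x else g x) => x y; rewrite !inE !negb_or.
case/andP => Hx1 Hx2; case/andP => Hy1 Hy2 Hxy.
case: (boolP (x \in XB)) => HxB; case: (boolP (y \in XB)) => HyB.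
- exact: Hf.
- by move: (occ_edge HxB HyB Hxy); rewrite (negbTE Hy2).
- by rewrite esym in Hxy; move: (occ_edge HyB HxB Hxy); rewrite (negbTE Hx2).
- by apply: (Hg _ _ _ _ Hxy); [move: Hx1; rewrite HxB | move: Hy1; rewrite HyB].
Qed.


Hypothesis Hstar : property_star e XB XC fX Bs.

Lemma inl_imset (A : {set V}) x :
  (inl x \in (@inl V (V * bool)) @: A) = (x \in A).
Proof. by rewrite mem_imset //; move=> ? ? []. Qed.

Lemma inr_imset (A : {set V}) z :
  (inr z \in (@inl V (V * bool)) @: A) = false.
Proof. by apply/imsetP => -[]. Qed.

Lemma aux_edge_sym : symmetric (aux_edge e XB XC fX).
Proof.
move=> [x|[v i]] [y|[w j]] //=.
by rewrite esym andbCA.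
Qed.

Definition TXs (S : {set V}) : {set auxV V} :=
  [set z | if z is inr (v, _) then (v \in XC) && (v \in S) else false].
Definition T1s (S : {set V}) (g : V -> bool) : {set auxV V} :=
  [set z | if z is inr (v, i) then [&& v \in XC, v \notin S & g v == i] else false].
Definition T2s (S : {set V}) (g : V -> bool) : {set auxV V} :=
  [set z | if z is inr (v, i) then [&& v \in XC, v \notin S & g v != i] else false].

Lemma part4 S g : partition4 (aux_T XC) (T1s S g) (T2s S g) set0 (TXs S).
Proof.
split.
- apply/and3P; split; rewrite disjoints_subset; apply/subsetP => -[x|[v i]];
    rewrite !inE //; try by case: (v \in XC); case: (v \in S); case: (g v == i).
- apply/and3P; split; rewrite disjoints_subset; apply/subsetP => -[x|[v i]];
    rewrite !inE //; try by case: (v \in XC); case: (v \in S); case: (g v == i).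
- apply/setP => -[x|[v i]]; rewrite !inE //.
  by case: (v \in XC); case: (v \in S); case: (g v == i).
Qed.

Definition phi (g : V -> bool) (z : auxV V) : bool :=
  match z with inl u => g u (+) fX u | inr (v, i) => ~~ (g v (+) i) end.

Lemma sepB (S : {set V}) (g : V -> bool) :
  (forall x y, x \notin S -> y \notin S -> e x y -> g x != g y) ->
  separated_in (aux_edge e XB XC fX)
    (aux_W XB XC :\: (TXs S :|: (@inl V (V * bool)) @: (S :&: XB))) (T1s S g) (T2s S g).
Proof.
move=> Hg x y Hx Hy; apply/negP => Hc.
have Hcl : closed (fun a b => [&& a \in aux_W XB XC :\: (TXs S :|: (@inl V (V * bool)) @: (S :&: XB)),
     b \in aux_W XB XC :\: (TXs S :|: (@inl V (V * bool)) @: (S :&: XB)) &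
     aux_edge e XB XC fX a b]) [pred z | phi g z].
  move=> [a|[v i]] [b|[w j]]; rewrite !inE ?inl_imset ?inr_imset ?orbF /= ?andbF //= ?inE.
  - case/and3P => /andP [Ha _] /andP [Hb _] /and3P [HaB HbB Hab].
    move: Ha Hb; rewrite HaB HbB !andbT => Ha Hb.
    move: (Hg _ _ Ha Hb Hab) (Hf HaB HbB Hab).
    by case: (g a); case: (g b); case: (fX a); case: (fX b).
  - case/and3P => /andP [Ha _] /andP [Hw _] /and4P [HwC HaB Hwa /eqP ->].
    move: Ha Hw; rewrite HaB HwC !andbT /= => Ha Hw.
    rewrite esym in Hwa; move: (Hg _ _ Ha Hw Hwa).
    by case: (g a); case: (g w); case: (fX a).
  - case/and3P => /andP [Hv _] /andP [Hb _] /and4P [HvC HbB Hvb /eqP ->].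
    move: Hb Hv; rewrite HbB HvC !andbT /= => Hb Hv.
    move: (Hg _ _ Hv Hb Hvb).
    by case: (g b); case: (g v); case: (fX b).
have := closed_connect Hcl Hc; clear Hc Hcl.
move: Hx Hy; case: x => [x|[v i]]; rewrite inE //; case: y => [y|[w j]]; rewrite inE //=.
case/and3P => _ _ /eqP <-; case/and3P => _ _ Hwj.
rewrite !inE /= addbb /=; move: Hwj; case: (g w); case: j => //.
Qed.


Lemma card_auxT : #|XC| <= #|aux_T XC|.
Proof.
have inj : injective (fun v : V => (@inr V (V * bool)) (v, false)) by move=> ? ? [].
rewrite -(card_imset XC inj); apply: subset_leq_card; apply/subsetP => z.
by case/imsetP => v Hv ->; rewrite inE.
Qed.

Lemma M3B (S : {set V}) (g : V -> bool) :
  (forall x y, x \notin S -> y \notin S -> e x y -> g x != g y) ->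
  #|S :&: XB| <= #|XC| -> exists S2, good S2 /\ #|S2| <= #|S|.
Proof.
move=> Hg Hc.
have Hsep : separates3 e XB XC fX (S :&: XB) (T1s S g) (T2s S g) set0 (TXs S).
  split; first exact: sepB.
  - by move=> ? ? _; rewrite inE.
  - by move=> ? ? _; rewrite inE.
have [Ss [HsB [Hsep12 _ _] Hmin]] : exists Ss : {set V}, [/\ Ss \subset Bs,
     separates3 e XB XC fX Ss (T1s S g) (T2s S g) set0 (TXs S) &
     forall S2 : {set V}, S2 \subset XB -> separates3 e XB XC fX S2 (T1s S g) (T2s S g) set0 (TXs S) ->
         #|Ss| <= #|S2|].
  apply: Hstar; first exact: part4.
  exists (S :&: XB); split => //; first exact: subsetIr.
  exact: leq_trans Hc card_auxT.
have HcS : #|Ss| <= #|S :&: XB| by apply: Hmin => //; exact: subsetIr.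
exists ((S :\: XB) :|: Ss); split; last first.
  apply: leq_trans (cardU_le _ _) _.
  by rewrite -(cardsID XB S) [#|S :&: XB| + _]addnC leq_add2l.
set A := aux_W XB XC :\: (TXs S :|: (@inl V (V * bool)) @: Ss).
set conn := conn_in (aux_edge e XB XC fX) A.
have connC : forall a b, conn a b = conn b a.
  apply: sym_connect_sym => a b; by rewrite aux_edge_sym andbCA.
have inAl : forall x, x \in XB -> x \notin Ss -> inl x \in A.
  by move=> x Hx Hs; rewrite !inE inl_imset Hs orbF /= inl_imset Hx.
have inAr : forall v i, v \in XC -> v \notin S -> inr (v, i) \in A.
  by move=> v i Hv Hs; rewrite !inE inr_imset orbF /= Hv (negbTE Hs) orbT.
have HsBB : Ss \subset XB := subset_trans HsB HBs.
split.
  rewrite disjoints_subset; apply/subsetP => x; rewrite !inE.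
  case/orP => [/andP [Hx _]|Hx]; first by rewrite (negbTE Hx) andbF.
  by move/subsetP: HsB => /(_ x Hx) ->.
pose h x := if x \in XB then fX x (+) [exists t, (t \in T1s S g) && conn (inl x) t] else g x.
have key : forall x y, x \in XB -> y \notin XB -> x \notin Ss -> y \notin S -> e x y -> h x != h y.
  move=> x y Hx Hy HxS HyS Hxy.
  have HyC := occ_edge Hx Hy Hxy.
  rewrite /h Hx (negbTE Hy).
  have Hc0 : conn (inl x) (inr (y, fX x)).
    apply: connect1; rewrite inAl // inAr //=.
    by rewrite HyC Hx esym Hxy eqxx.
  case: (boolP (g y == fX x)) => Hgy.
    have -> : [exists t, (t \in T1s S g) && conn (inl x) t].
      by apply/existsP; exists (inr (y, fX x)); rewrite Hc0 !inE HyC HyS Hgy.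
    by rewrite (eqP Hgy); case: (fX x).
  have -> : [exists t, (t \in T1s S g) && conn (inl x) t] = false.
    apply/negbTE/negP; case/existsP => t /andP [Ht Hct].
    have : conn t (inr (y, fX x)) by rewrite connC in Hct; exact: connect_trans Hct Hc0.
    apply/negP; apply: Hsep12 => //.
    by rewrite !inE HyC HyS Hgy.
  by move: Hgy; case: (g y); case: (fX x).
exists h => x y; rewrite !inE !negb_or.
case/andP => Hx1 Hx2; case/andP => Hy1 Hy2 Hxy.
case: (boolP (x \in XB)) => HxB; case: (boolP (y \in XB)) => HyB.
- have Hx' : inl x \in A by apply: inAl.
  have Hy' : inl y \in A by apply: inAl.
  have Exy : forall t, conn (inl x) t = conn (inl y) t.
    move=> t; apply/idP/idP => H; apply: connect_trans H; apply: connect1.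
      by rewrite Hx' Hy' /= HxB HyB esym Hxy.
    by rewrite Hx' Hy' /= HxB HyB Hxy.
  rewrite /h HxB HyB.
  have -> : [exists t, (t \in T1s S g) && conn (inl x) t] = [exists t, (t \in T1s S g) && conn (inl y) t].
    by apply/existsP/existsP => -[t Ht]; exists t; [rewrite -Exy | rewrite Exy].
  by move: (Hf HxB HyB Hxy); case: (fX x); case: (fX y); case: [exists _, _].
- apply: key => //; by move: Hy1; rewrite HyB.
- rewrite eq_sym; apply: key => //; first by move: Hx1; rewrite HxB.
  by rewrite esym.
- rewrite /h (negbTE HxB) (negbTE HyB).
  by apply: (Hg _ _ _ _ Hxy); [move: Hx1; rewrite HxB | move: Hy1; rewrite HyB].
Qed.


Lemma M3 (S : {set V}) : is_oct e [set: V] S -> exists S2, good S2 /\ #|S2| <= #|S|.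
Proof.
case=> _ [g Hg].
have Hg' : forall x y, x \notin S -> y \notin S -> e x y -> g x != g y.
  by move=> x y Hx Hy; apply: Hg; rewrite !inE ?Hx ?Hy.
case: (leqP #|S :&: XB| #|XC|) => Hc; [exact: M3B Hg' Hc | exact: M3A Hg' Hc].
Qed.

Definition copy1 (p : bool) (i : 'I_4) : bool := (i < (if p then 2 else 1))%N.

Definition o0 : 'I_4 := @Ordinal 4 0 isT.
Definition o1 : 'I_4 := @Ordinal 4 1 isT.
Definition o2 : 'I_4 := @Ordinal 4 2 isT.
Definition o3 : 'I_4 := @Ordinal 4 3 isT.

Section M2sec.
Variables (S' : {set redV V}) (g' : redV V -> bool).
Hypothesis HSW : S' \subset red_W e XB XC Bs.
Hypothesis Hg' : forall a b, a \in red_W e XB XC Bs :\: S' -> b \in red_W e XB XC Bs :\: S' ->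
   red_edge e XB XC Bs a b -> g' a != g' b.

Definition Pset : {set V} := [set x | inl x \in S'].
Definition Qkeys : {set V * V * bool} :=
  [set k | [exists i, copy1 k.2 i && (inr (k, i) \in S')] &&
           [exists j, ~~ copy1 k.2 j && (inr (k, j) \in S')]].
Definition Qset : {set V} := [set k.1.1 | k in Qkeys].

Lemma notD_XCBs u : u \in XC :|: Bs -> u \notin XB :\: Bs.
Proof.
rewrite !inE; case/orP => H; last by rewrite H.
by case: (boolP (u \in XB)) => HB; [rewrite (occ_BC HB) in H | rewrite andbF].
Qed.

Lemma gad u v p : u \in XC :|: Bs -> v \in XC :|: Bs -> (enum_rank u <= enum_rank v)%N ->
  walk_through e (XB :\: Bs) u v p -> inl u \notin S' -> inl v \notin S' ->
  (u, v, p) \notin Qkeys -> p = g' (inl u) (+) g' (inl v).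
Proof.
move=> Hu Hv Hr Hw HuS HvS HQ.
have HE : forall a b, a \in red_W e XB XC Bs -> a \notin S' -> b \in red_W e XB XC Bs ->
    b \notin S' -> red_base e a b -> g' a != g' b.
  move=> a b Ha Has Hb Hbs Hab; apply: Hg'.
  - by rewrite in_setD Has Ha.
  - by rewrite in_setD Hbs Hb.
  - by rewrite /red_edge Ha Hb Hab.
have HuW : inl u \in red_W e XB XC Bs by rewrite inE notD_XCBs.
have HvW : inl v \in red_W e XB XC Bs by rewrite inE notD_XCBs.
have HzW : forall i : 'I_4, p || (i < 2)%N -> inr (u, v, p, i) \in red_W e XB XC Bs.
  by move=> i Hi; rewrite inE Hu Hv Hr Hi (asboolT Hw).
have Hcase : (forall i, copy1 p i -> inr (u, v, p, i) \notin S') \/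
             (forall j, ~~ copy1 p j -> inr (u, v, p, j) \notin S').
  move: HQ; rewrite inE /= negb_and => /orP [H|H]; [left|right] => i Hi;
    apply/negP => Hin; move/negP: H; apply; apply/existsP; exists i; rewrite Hin ?Hi //.
case: p Hw HzW Hcase HQ => Hw HzW Hcase HQ.
- have Hpath : forall i1 i2 : 'I_4, inr (u, v, true, i1) \notin S' -> inr (u, v, true, i2) \notin S' ->
      ((i1 == 0 :> nat) && (i2 == 1 :> nat)) || ((i1 == 2 :> nat) && (i2 == 3 :> nat)) ->
      g' (inl u) != g' (inl v).
    move=> i1 i2 H1 H2 Hi.
    have E1 : g' (inr (u, v, true, i1)) != g' (inl u).
      apply: HE => //; first exact: HzW.
      by rewrite /= eqxx andbT; case/orP: Hi => /andP [-> _]; rewrite ?orbT.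
    have E2 : g' (inr (u, v, true, i1)) != g' (inr (u, v, true, i2)).
      by apply: HE => //; [exact: HzW | exact: HzW | rewrite /= eqxx Hi].
    have E3 : g' (inr (u, v, true, i2)) != g' (inl v).
      apply: HE => //; first exact: HzW.
      by rewrite /= eqxx andbT; case/orP: Hi => /andP [_ ->]; rewrite ?orbT.
    by move: E1 E2 E3; case: (g' (inl u)); case: (g' (inl v)); case: (g' (inr _)); case: (g' (inr _)).
  case: Hcase => H.
  + have := Hpath o0 o1 (H o0 isT) (H o1 isT) isT.
    by case: (g' (inl u)); case: (g' (inl v)).
  + have := Hpath o2 o3 (H o2 isT) (H o3 isT) isT.
    by case: (g' (inl u)); case: (g' (inl v)).
- have Hone : forall i : 'I_4, (i < 2)%N -> inr (u, v, false, i) \notin S' ->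
      g' (inl u) = g' (inl v).
    move=> i Hi H1.
    have E1 : g' (inr (u, v, false, i)) != g' (inl u).
      by apply: HE => //; [exact: HzW | rewrite /= eqxx].
    have E2 : g' (inr (u, v, false, i)) != g' (inl v).
      by apply: HE => //; [exact: HzW | rewrite /= eqxx orbT].
    by move: E1 E2; case: (g' (inl u)); case: (g' (inl v)); case: (g' (inr _)).
  case: Hcase => H.
  + by rewrite (Hone o0 isT (H o0 isT)) addbb.
  + by rewrite (Hone o1 isT (H o1 isT)) addbb.
Qed.


Lemma inQ u v p : (u, v, p) \in Qkeys -> u \in Qset.
Proof. by move=> H; apply/imsetP; exists (u, v, p). Qed.

Lemma gad2 u v p : u \in XC :|: Bs -> v \in XC :|: Bs ->
  u \notin Pset :|: Qset -> v \notin Pset :|: Qset ->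
  walk_through e (XB :\: Bs) u v p -> p = g' (inl u) (+) g' (inl v).
Proof.
move=> Hu Hv; rewrite !inE !negb_or => /andP [HuP HuQ] /andP [HvP HvQ] Hw.
case: (leqP (enum_rank u) (enum_rank v)) => Hr.
  apply: gad => //; apply/negP => /inQ; exact/negP.
rewrite addbC; apply: gad => //; first exact: ltnW.
- exact: walk_through_sym.
- apply/negP => /inQ; exact/negP.
Qed.

Definition anch (a w : V) (q : bool) : Prop :=
  [/\ a \in XC :|: Bs, a \notin Pset :|: Qset, w \in XB :\: Bs &
      exists t, [/\ all (mem (XB :\: Bs)) t, path e a (rcons t w) & odd (size t).+1 = q]].

Lemma anch_cons a b w q1 q2 : anch a w q1 -> anch b w q2 ->
  g' (inl a) (+) q1 = g' (inl b) (+) q2.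
Proof.
move=> [Ha HaP Hw [t1 [Ht1 Hp1 Ho1]]] [Hb HbP _ [t2 [Ht2 Hp2 Ho2]]].
have : walk_through e (XB :\: Bs) a b (q1 (+) q2).
  exists (rcons t1 w ++ rev t2); split.
  - by case: t1 {Ht1 Hp1 Ho1}.
  - by rewrite all_cat all_rcons all_rev Ht1 Ht2 !andbT; exact: Hw.
  - by rewrite rcons_cat cat_path last_rcons Hp1 path_rev_rcons.
  - by rewrite -Ho1 -Ho2 size_cat size_rcons size_rev -addnS oddD.
move/(gad2 Ha Hb HaP HbP); clear Ho1 Ho2.
by case: (g' (inl a)); case: (g' (inl b)); case: q1; case: q2.
Qed.

Lemma anch_ext a x y q : anch a x q -> e x y -> y \in XB :\: Bs -> anch a y (~~ q).
Proof.
move=> [Ha HaP Hx [t [Ht Hp Ho]]] Hxy Hy; split => //.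
exists (rcons t x); split.
- by rewrite all_rcons Ht andbT; exact: Hx.
- by rewrite rcons_path Hp last_rcons.
- by rewrite size_rcons -Ho.
Qed.

Definition hcol (w : V) : bool :=
  if w \in XB :\: Bs then
    (if `[< exists a q, anch a w q >] then `[< exists a q, anch a w q /\ g' (inl a) (+) q = true >]
     else fX w)
  else g' (inl w).

Lemma hcol_anch a w q : anch a w q -> hcol w = g' (inl a) (+) q.
Proof.
move=> H; have [_ _ Hw _] := H.
rewrite /hcol Hw asboolT; last by exists a, q.
case E : (g' (inl a) (+) q).
  by apply: asboolT; exists a, q.
apply: asboolF => -[a' [q' [H' E']]].
by rewrite (anch_cons H' H) E in E'.
Qed.

Lemma M2 : forall x y, x \notin Pset :|: Qset -> y \notin Pset :|: Qset -> e x y -> hcol x != hcol y.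
Proof.
have key : forall x y, x \notin Pset :|: Qset -> y \notin Pset :|: Qset -> e x y ->
    x \notin XB :\: Bs -> y \in XB :\: Bs -> hcol x != hcol y.
  move=> x y Hx Hy Hxy HxD HyD.
  have HxCB : x \in XC :|: Bs.
    move: HxD HyD; rewrite !inE negb_and negbK => /orP [H|H] /andP [_ HyB]; first by rewrite H orbT.
    rewrite esym in Hxy; by rewrite (occ_edge HyB H Hxy).
  have Ha : anch x y true.
    by split => //; exists [::]; rewrite /= Hxy.
  rewrite (hcol_anch Ha) /hcol (negbTE HxD).
  by case: (g' (inl x)).
move=> x y Hx Hy Hxy.
case: (boolP (x \in XB :\: Bs)) => HxD; case: (boolP (y \in XB :\: Bs)) => HyD.
- have Ex : forall q, (exists a, anch a x q) -> exists a, anch a y (~~ q).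
    by move=> q [a Ha]; exists a; exact: anch_ext Ha Hxy HyD.
  have Ey : forall q, (exists a, anch a y q) -> exists a, anch a x (~~ q).
    by move=> q [a Ha]; exists a; apply: anch_ext Ha _ HxD; rewrite esym.
  case: (pselect (exists a q, anch a x q)) => [[a [q Ha]]|Hn].
    rewrite (hcol_anch Ha) (hcol_anch (anch_ext Ha Hxy HyD)).
    by rewrite addbN; case: (g' (inl a) (+) q).
  have Hn' : ~ (exists a q, anch a y q).
    move=> [a [q Ha]]; apply: Hn; have [b Hb] := Ey q (ex_intro _ a Ha); by exists b, (~~ q).
  rewrite /hcol HxD HyD (asboolF Hn) (asboolF Hn').
  by move: HxD HyD; rewrite !inE => /andP [_ HxB] /andP [_ HyB]; apply: Hf.
- by rewrite eq_sym; apply: key => //; rewrite esym.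
- exact: key.
- rewrite /hcol (negbTE HxD) (negbTE HyD).
  move: Hx Hy; rewrite !inE !negb_or => /andP [HxP _] /andP [HyP _].
  apply: Hg'.
  + by rewrite in_setD HxP inE HxD.
  + by rewrite in_setD HyP inE HyD.
  + by rewrite /red_edge [inl x \in _]inE [inl y \in _]inE HxD HyD /= Hxy.
Qed.

End M2sec.

End Main.

Lemma cardUD (T : finType) (A B : {set T}) : [disjoint A & B] -> #|A :|: B| = #|A| + #|B|.
Proof. by move=> H; rewrite cardsU (disjoint_setI0 H) cards0 subn0. Qed.

Definition keyf (V : finType) (z : redV V) : option (V * V * bool) :=
  if z is inr (k, _) then Some k else None.

Theorem lemma5p3 (V : finType) (e : rel V) (XB XC XR Bs : {set V})
    (fX : V -> bool) (S' : {set redV V}) :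
  simple_graph e ->
  is_OCC e XB XC XR ->
  proper2col_on e XB fX ->
  Bs \subset XB ->
  property_star e XB XC fX Bs ->
  is_min_oct (red_edge e XB XC Bs) (red_W e XB XC Bs) S' ->
  S' \subset (@inl V (V * V * bool * 'I_4)) @: [set: V] :&: red_W e XB XC Bs /\
  is_min_oct e [set: V] [set x : V | inl x \in S'].
Proof.
move=> [Hsym _] Hocc Hf HBs Hstar [[HSW [g' Hg']] Hmin].
set P := Pset S'; set Q := Qset S'.
have HPQ := M2 Hsym Hocc Hf Hg'.
have HPQd : [disjoint P :|: Q & XB :\: Bs].
  rewrite disjoints_subset; apply/subsetP => x; rewrite in_setC inE; case/orP.
  - rewrite inE => /(subsetP HSW); by rewrite inE.
  - case/imsetP => k; rewrite inE => /andP [/existsP [i /andP [_ Hin]] _] ->.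
    move: (subsetP HSW _ Hin); case: k {Hin} => [[u v] p].
    rewrite inE => /and5P [Hk _ _ _ _]; exact: (notD_XCBs Hocc).
have Hoct := M1 XC HPQ HPQd.
have Hc1 : #|S'| <= #|P| + #|Qkeys S'|.
  apply: leq_trans (Hmin _ Hoct) _.
  rewrite card_imset; last by move=> ? ? [].
  apply: leq_trans (cardU_le _ _) _; rewrite leq_add2l; exact: leq_imset_card.
set Gs1 := [set z in S' | if z is inr (k, i) then copy1 k.2 i else false].
set Gs2 := [set z in S' | if z is inr (k, i) then ~~ copy1 k.2 i else false].
have HinjSome : injective (@Some (V * V * bool)) by move=> ? ? [].
have Hq1 : #|Qkeys S'| <= #|Gs1|.
  rewrite -(card_imset _ HinjSome); apply: leq_trans (leq_imset_card (@keyf V) Gs1).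
  apply: subset_leq_card; apply/subsetP => o /imsetP [k]; rewrite inE.
  case/andP => /existsP [i /andP [Hi Hin]] _ ->.
  by apply/imsetP; exists (inr (k, i)); rewrite // inE Hin.
have Hq2 : #|Qkeys S'| <= #|Gs2|.
  rewrite -(card_imset _ HinjSome); apply: leq_trans (leq_imset_card (@keyf V) Gs2).
  apply: subset_leq_card; apply/subsetP => o /imsetP [k]; rewrite inE.
  case/andP => _ /existsP [i /andP [Hi Hin]] ->.
  by apply/imsetP; exists (inr (k, i)); rewrite // inE Hin.
have HinjL : injective (@inl V (V * V * bool * 'I_4)) by move=> ? ? [].
have Hc2 : #|P| + #|Gs1| + #|Gs2| <= #|S'|.
  rewrite -(card_imset P HinjL) -cardUD; last first.
    rewrite disjoints_subset; apply/subsetP => -[x|[k i]]; rewrite !inE //;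
    try (by rewrite andbF); try (by case/imsetP => ? _ []);
    by case: (_ \in S'); case: (copy1 _ _).
  rewrite -cardUD; last first.
    rewrite disjoints_subset; apply/subsetP => -[x|[k i]]; rewrite !inE //.
    - by rewrite andbF.
    - case/orP => [/imsetP [? _] //|]; by case: (_ \in S'); case: (copy1 _ _).
  apply: subset_leq_card; apply/subsetP => z; rewrite !inE.
  case/orP => [/orP [/imsetP [x Hx ->]|/andP [H _]]|/andP [H _]] //.
  by move: Hx; rewrite inE.
have HG1 : Gs1 = set0 by apply/eqP; rewrite -cards_eq0; apply/eqP; lia.
have HG2 : Gs2 = set0 by apply/eqP; rewrite -cards_eq0; apply/eqP; lia.
have HQ0 : #|Qkeys S'| = 0 by rewrite HG1 cards0 in Hq1; lia.
have Hnoinr : forall k i, inr (k, i) \notin S'.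
  move=> k i; apply/negP => Hin.
  case: (boolP (copy1 k.2 i)) => Hc.
    have : inr (k, i) \in Gs1 by rewrite inE Hin.
    by rewrite HG1 inE.
  have : inr (k, i) \in Gs2 by rewrite inE Hin.
  by rewrite HG2 inE.
have HQe : Q = set0.
  apply/setP => x; rewrite inE; apply/imsetP => -[k Hk _].
  by move/eqP: HQ0; rewrite cards_eq0 => /eqP HQ; rewrite HQ inE in Hk.
have HS'P : S' = inl @: P.
  apply/setP => -[x|[k i]]; first by rewrite (mem_imset _ _ HinjL) inE.
  by rewrite (negbTE (Hnoinr k i)); apply/Logic.eq_sym/negbTE/imsetP => -[].
split.
  apply/subsetP => z Hz; rewrite inE (subsetP HSW _ Hz) andbT.
  by move: Hz; rewrite HS'P => /imsetP [x _ ->]; apply/imsetP; exists x.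
change (is_min_oct e [set: V] P).
split.
  split; first exact: subsetT.
  exists (hcol e XB XC Bs fX S' g') => x y; rewrite !inE /= !andbT => Hx Hy.
  have HP : forall x, inl x \notin S' -> x \notin P :|: Q by move=> z; rewrite HQe setU0 inE.
  by apply: HPQ; apply: HP.
move=> S2 HS2.
have [S3 [[Hd [h Hh]] Hc]] := M3 Hsym Hocc Hf HBs Hstar HS2.
have := Hmin _ (M1 XC Hh Hd).
rewrite (card_imset _ HinjL) HS'P (card_imset _ HinjL) => H.
exact: leq_trans H Hc.
Qed.
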